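(* Let $X,Y$ be topological spaces, $U$ an abelian group, $f\colon[X,Y]\to U$ a map, and $\bar f\colon\mathbb Z[[X,Y]]\to U$ the homomorphism with $\bar f(e_w)=f(w)$. For $r\in\mathbb N$, the condition $\operatorname{ord}f\le r$ is equivalent to: $\bar f([A])=0$ for every $A\in\mathbb Z[C(X,Y)]$ with $\theta(A)>r$.
   Context: $\mathbb Z[S]$ is the free abelian group on a set $S$ with basis $e_x$. For $A=\sum m_ae_a\in\mathbb Z[C(X,Y)]$, $[A]=\sum m_ae_{[a]}\in\mathbb Z[[X,Y]]$, $A|_V=\sum m_ae_{a|_V}$, and $\theta(A)=\inf\{\#V:V\subset X\text{ finite},A|_V\ne0\}$. Order: let $E_r$ be the group of functions $(X\times Y)^r\to\mathbb Z$, $I_r(a)$ the characteristic function of $\Gamma_a^r$ ($\Gamma_a$ the graph of $a$), $D_r\subset E_r$ the subgroup generated by all $I_r(a)$; $\operatorname{ord}f$ is the infimum of $r\in\mathbb N$ such that there is a homomorphism $l\colon D_r\to U$ with $f([a])=l(I_r(a))$ for all $a\in C(X,Y)$. *)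

(* Defs.v *)
From HB Require Import structures.
From mathcomp Require Import all_boot all_order all_algebra.
From mathcomp Require Import all_classical all_reals.
From mathcomp Require Import topology.
From mathcomp Require Import Rstruct Rstruct_topology.

Set Implicit Arguments.
Unset Strict Implicit.
Unset Printing Implicit Defensive.
Import Order.TTheory GRing.Theory Num.Theory.
Local Open Scope ring_scope.
Local Open Scope classical_set_scope.

Section Defs.
Variables (X Y : topologicalType).

Definition CXY := continuousType X Y.

Definition homotopic (a b : CXY) : Prop :=
  exists H : X * Rdefinitions.R -> Y,
    {within [set: X] `*` [set` `[0%R, 1%R]], continuous H} /\
    (forall x, H (x, 0%R) = a x) /\ (forall x, H (x, 1%R) = b x).

(* Elements of Z[C(X,Y)] represented as formal sums  sum m_a e_a,
   i.e. finite lists of pairs (m_a, a). *)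
Definition formal := seq (int * CXY).

Definition fbar (U : zmodType) (f : CXY -> U) (A : formal) : U :=
  \sum_(c <- A) (f c.2 *~ c.1).

Definition agree_on (V : seq X) (a g : X -> Y) : bool :=
  `[< forall x, x \in V -> a x = g x >].

(* A|_V = 0 in Z[C(V,Y)]: for every map g : V -> Y (given as a map on X,
   only its values on V matter), the coefficient of e_g in A|_V vanishes. *)
Definition restr_zero (A : formal) (V : seq X) : Prop :=
  forall g : X -> Y, \sum_(c <- A | agree_on V c.2 g) c.1 = 0.

(* theta(A) > r : every finite V subset X (a duplicate-free list) with
   A|_V <> 0 has more than r elements. *)
Definition theta_gt (A : formal) (r : nat) : Prop :=
  forall V : seq X, uniq V -> ~ restr_zero A V -> (r < size V)%N.

Definition tupr (r : nat) := 'I_r -> X * Y.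
Definition Er (r : nat) := tupr r -> int.

Definition Ir (r : nat) (a : X -> Y) : Er r :=
  fun p => if `[< forall i, (p i).2 = a (p i).1 >] then 1 else 0.

(* D_r : subgroup of E_r generated by the I_r(a), a in C(X,Y)
   (= the set of all finite Z-linear combinations). *)
Definition Dr (r : nat) : set (Er r) :=
  fun u => exists s : formal, u = fun p => \sum_(c <- s) c.1 * @Ir r c.2 p.

(* There is a homomorphism l : D_r -> U with f([a]) = l(I_r(a)).
   A homomorphism on D_r is given as a map on E_r additive on D_r. *)
Definition order_witness (U : zmodType) (f : CXY -> U) (r : nat) : Prop :=
  exists l : Er r -> U,
    (forall u v, Dr u -> Dr v -> l (fun p => u p + v p) = l u + l v) /\
    (forall a : CXY, f a = l (@Ir r a)).

(* ord f <= r, with ord f the infimum in N u {oo} of such r. *)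
Definition ord_le (U : zmodType) (f : CXY -> U) (r : nat) : Prop :=
  exists r', (r' <= r)%N /\ order_witness f r'.

End Defs.

(* Main.v *)
Require Import Defs.
From HB Require Import structures.
From mathcomp Require Import all_boot all_order all_algebra.
From mathcomp Require Import all_classical all_reals.
From mathcomp Require Import topology.
Import GRing.Theory.
Local Open Scope ring_scope.

Section Aux.
Variables (X Y : topologicalType).

Definition rep (r : nat) (s : formal X Y) : Er X Y r :=
  fun p => \sum_(c <- s) c.1 * @Ir X Y r c.2 p.

Lemma rep_cat r s t : rep r (s ++ t) = fun p => rep r s p + rep r t p.
Proof. by apply: funext => p; rewrite /rep big_cat. Qed.

Lemma Ir_iff r (a : X -> Y) p :
  Ir a p = if `[< forall i : 'I_r, (p i).2 = a (p i).1 >] then 1 else 0.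
Proof. by []. Qed.


Lemma rep1 r (c : int * CXY X Y) : rep r [:: c] = fun p => c.1 * Ir c.2 p.
Proof. by apply: funext => p; rewrite /rep big_seq1. Qed.

Section Fwd.
Variables (U : zmodType) (f : CXY X Y -> U) (r : nat) (l : Er X Y r -> U).
Hypothesis ladd : forall u v, Dr u -> Dr v -> l (fun p => u p + v p) = l u + l v.
Hypothesis lf : forall a : CXY X Y, f a = l (@Ir X Y r a).

Lemma Dr_rep s : Dr (rep r s). Proof. by exists s. Qed.

Lemma l0 : l (fun _ => 0) = 0.
Proof.
have D0 : Dr (fun _ : tupr X Y r => (0:int)) by exists [::]; apply: funext => p; rewrite big_nil.
have := ladd _ _ D0 D0.
have -> : (fun p : tupr X Y r => (fun _ => (0:int)) p + (fun _ => 0) p) = fun _ => 0.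
  by apply: funext => p; rewrite addr0.
by move/eqP; rewrite eq_sym -subr_eq0 addrK => /eqP.
Qed.

Lemma lN u : Dr u -> l (fun p => - u p) = - l u.
Proof.
move=> [s ->].
have DN : Dr (fun p => - rep r s p).
  exists [seq (- c.1, c.2) | c <- s]; apply: funext => p.
  by rewrite big_map /rep -sumrN; apply: eq_bigr => c _; rewrite mulNr.
have := ladd _ _ (Dr_rep s) DN.
have -> : (fun p => rep r s p + (fun p => - rep r s p) p) = fun _ => 0.
  by apply: funext => p; rewrite subrr.
rewrite l0 => /eqP; rewrite eq_sym addrC addr_eq0 => /eqP ->; by [].
Qed.

Lemma lnat (n : nat) (a : CXY X Y) :
  l (fun p => n%:Z * Ir a p) = l (Ir a) *+ n.
Proof.
elim: n => [|n IH].
  rewrite mulr0n -l0; congr l; apply: funext => p; by rewrite mul0r.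
have D1 : Dr (fun p => @Ir X Y r a p) by exists [:: (1, a)]; apply: funext => p; rewrite big_seq1 mul1r.
have Dn : Dr (fun p => n%:Z * @Ir X Y r a p) by exists [:: (n%:Z, a)]; apply: funext => p; rewrite big_seq1.
have := ladd _ _ D1 Dn.
have -> : (fun p => (fun p => @Ir X Y r a p) p + (fun p => n%:Z * Ir a p) p) = fun p => n.+1%:Z * Ir a p.
  by apply: funext => p; rewrite intS mulrDl mul1r.
by move=> ->; rewrite IH mulrS.
Qed.

Lemma lint (m : int) (a : CXY X Y) :
  l (fun p => m * Ir a p) = l (Ir a) *~ m.
Proof.
case: m => n; first by rewrite lnat.
have Dn : Dr (fun p => n.+1%:Z * @Ir X Y r a p) by exists [:: (n.+1%:Z, a)]; apply: funext => p; rewrite big_seq1.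
rewrite NegzE mulrNz.
change (l (Ir a) *~ n.+1) with (l (Ir a) *+ n.+1).
rewrite -lnat -(@lN _ Dn); congr l; apply: funext => p; by rewrite mulNr.
Qed.

Lemma fbar_rep (A : formal X Y) : fbar f A = l (rep r A).
Proof.
elim: A => [|c A IH].
  rewrite /fbar big_nil -l0; congr l; apply: funext => p; by rewrite /rep big_nil.
rewrite /fbar big_cons -/(fbar f A) IH.
have -> : rep r (c :: A) = fun p => rep r [:: c] p + rep r A p by rewrite -rep_cat.
rewrite ladd; try exact: Dr_rep.
rewrite (rep1 r c) lint lf //.
Qed.
End Fwd.


Lemma rep_zero (r' r : nat) (A : formal X Y) :
  (r' <= r)%N -> theta_gt A r -> rep r' A = fun _ => 0.
Proof.
move=> hr hth; apply: funext => p.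
case hA: A => [|c0 A']; first by rewrite /rep big_nil.
rewrite -hA; set a0 := c0.2.
case: (pselect (forall i j, (p i).1 = (p j).1 -> (p i).2 = (p j).2)) => [fn|nfn];
  last first.
  rewrite /rep big1 // => c _; rewrite /Ir asboolF ?mulr0 // => H.
  by apply: nfn => i j e; rewrite !H e.
pose g x := match pselect (exists i, (p i).1 = x) with
  | left h => (p (proj1_sig (cid h))).2 | right _ => a0 x end.
have gE : forall i, g (p i).1 = (p i).2.
  move=> i; rewrite /g; case: pselect => [h|h]; last by exfalso; apply: h; exists i.
  by case: (cid h) => j /= hj; exact: fn.
pose V := undup [seq (p i).1 | i <- enum 'I_r'].
have hV : restr_zero A V.
  case: (pselect (restr_zero A V)) => // nz; exfalso.
  have h2 := hth V (undup_uniq _) nz.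
  have h1 : (size V <= r')%N.
    by rewrite (leq_trans (size_undup _)) // size_map size_enum_ord.
  by have := leq_ltn_trans (leq_trans h1 hr) h2; rewrite ltnn.
rewrite -(hV g) /rep [RHS]big_mkcond; apply: eq_bigr => c _.
have E : (forall i, (p i).2 = c.2 (p i).1) <-> (forall x, x \in V -> c.2 x = g x).
  split.
    move=> H x; rewrite mem_undup => /mapP [i _ ->]; by rewrite gE H.
  move=> H i; rewrite H; first by rewrite gE.
  by rewrite mem_undup; apply/mapP; exists i; rewrite ?mem_enum.
rewrite /Ir /agree_on (asbool_equiv_eq E).
by case: (`[< _ >]); rewrite ?mulr1 ?mulr0.
Qed.

Lemma theta_of_rep (r r' : nat) (A : formal X Y) :
  ((r' = r /\ exists x : X, True) \/ (r' = 0%N /\ ~ exists x : X, True)) ->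
  rep r' A = (fun _ => 0) -> theta_gt A r.
Proof.
move=> hr hA V uV nz; rewrite ltnNge; apply/negP => hs; apply: nz => g.
have key : forall p : tupr X Y r', \sum_(c <- A) c.1 * Ir c.2 p = 0.
  by move=> p; exact: (congr1 (fun u => u p) hA).
case: V uV hs => [|x0 V'] uV hs.
  rewrite (eq_bigl (fun _ => true)); last first.
    by move=> c; apply/asboolP => x; rewrite in_nil.
  case: r' hr key {hA} => [|n] hr key.
    have p : tupr X Y 0 by case=> m hm; exfalso; rewrite ltn0 in hm.
    rewrite -[RHS](key p); apply: eq_bigr => c _.
    by rewrite /Ir asboolT ?mulr1 //; case=> m hm; exfalso; rewrite ltn0 in hm.
  case: hr => [[_ [x0 _]] | [//]].
  pose L := undup [seq (c.2 : X -> Y) x0 | c : int * CXY X Y <- A].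
  pose py y : tupr X Y n.+1 := fun _ => (x0, y).
  have -> : \sum_(c <- A) c.1 = \sum_(c <- A) \sum_(y <- L) c.1 * Ir c.2 (py y).
    apply: eq_big_seq => c cA.
    rewrite (bigD1_seq (c.2 x0)) ?undup_uniq //=; last first.
      by rewrite mem_undup; apply/mapP; exists c.
    rewrite big1 ?addr0; first by rewrite /Ir asboolT ?mulr1.
    move=> y yn; rewrite /Ir asboolF ?mulr0 // => H.
    by move: (H ord0) => /= e; rewrite e eqxx in yn.
  by rewrite exchange_big big1 // => y _; exact: key.
have r'r : r' = r.
  by case: hr => [[]//|[_ hne]]; exfalso; apply: hne; exists x0.
subst r'.
pose W := x0 :: V'.
pose p : tupr X Y r := fun i => (nth x0 W i, g (nth x0 W i)).
rewrite -[RHS](key p) [LHS]big_mkcond; apply: eq_bigr => c _.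
have E : (forall i, (p i).2 = c.2 (p i).1) <-> (forall x, x \in W -> c.2 x = g x).
  split.
    move=> H x xW.
    have hi : (index x W < r)%N by rewrite (leq_trans _ hs) // index_mem.
    by have := H (Ordinal hi); rewrite /= nth_index // => ->.
  move=> H i; rewrite /= H //.
  case: (ltnP i (size W)) => hi; first exact: mem_nth.
  by rewrite nth_default // mem_head.
rewrite /Ir /agree_on (asbool_equiv_eq E).
by case: (`[< _ >]); rewrite ?mulr1 ?mulr0.
Qed.

Lemma build (U : zmodType) (f : CXY X Y -> U) (r r' : nat) :
  ((r' = r /\ exists x : X, True) \/ (r' = 0%N /\ ~ exists x : X, True)) ->
  (forall A : formal X Y, theta_gt A r -> fbar f A = 0) ->
  order_witness f r'.
Proof.
move=> hr H.
have wd : forall s s', rep r' s = rep r' s' -> fbar f s = fbar f s'.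
  move=> s s' e; apply/eqP; rewrite -subr_eq0; apply/eqP.
  have hm : rep r' [seq (- c.1, c.2) | c <- s'] = fun p => - rep r' s' p.
    apply: funext => p; rewrite /rep big_map -sumrN.
    by apply: eq_bigr => c _; rewrite mulNr.
  have th : theta_gt (s ++ [seq (- c.1, c.2) | c <- s']) r.
    apply: (@theta_of_rep r r' _ hr); rewrite rep_cat hm e.
    by apply: funext => p; rewrite subrr.
  move: (H _ th); rewrite /fbar big_cat big_map /= => e0; rewrite -[RHS]e0.
  congr (_ + _); rewrite -sumrN; apply: eq_bigr => c _; by rewrite mulrNz.
pose l (u : Er X Y r') := match pselect (exists s, u = rep r' s) with
  | left h => fbar f (proj1_sig (cid h)) | right _ => 0 end.
have lE : forall s, l (rep r' s) = fbar f s.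
  move=> s; rewrite /l; case: pselect => [h|h]; last by exfalso; apply: h; exists s.
  by case: (cid h) => s' /= e; rewrite (wd _ _ (esym e)).
exists l; split.
  move=> u v [s ->] [t ->].
  have := lE (s ++ t); rewrite rep_cat => ->.
  by rewrite /fbar big_cat -/(fbar f s) -/(fbar f t) -!lE.
move=> a.
have -> : Ir a = rep r' [:: (1, a)].
  by rewrite rep1; apply: funext => p /=; rewrite mul1r.
by rewrite lE /fbar big_seq1 mulr1z.
Qed.

End Aux.

Theorem mainTheorem15 (X Y : topologicalType) (U : zmodType)
  (f : CXY X Y -> U)
  (hf : forall a b : CXY X Y, homotopic a b -> f a = f b)
  (r : nat) :
  ord_le f r <-> (forall A : formal X Y, theta_gt A r -> fbar f A = 0).
Proof.
split.
  move=> [r' [hr [l [ladd lf]]]] A hth.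
  by rewrite (@fbar_rep X Y U f r' l ladd lf) (@rep_zero X Y r' r A hr hth) (@l0 X Y U r' l ladd).
move=> H.
case: (pselect (exists x : X, True)) => hX.
  exists r; split; first exact: leqnn.
  by apply: (@build X Y U f r r _ H); left.
exists 0%N; split; first exact: leq0n.
by apply: (@build X Y U f r 0%N _ H); right.
Qed.
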